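(* For integers $b\ge a\ge 0$, $$\sum_{\substack{\pi\in\mathcal I_{a+b}(321)\\ \mathrm{fp}(\pi)\ge b-a}} q^{\mathrm{maj}(\pi)}=\binom{a+b}{a}_q.$$ Consequently, for integers $0\le \ell\le n$ with $\ell\equiv n\pmod 2$, $$\sum_{\substack{\pi\in\mathcal I_{n}(321)\\ \mathrm{fp}(\pi)=\ell}} q^{\mathrm{maj}(\pi)}=\binom{n}{\frac{n-\ell}{2}}_q-\binom{n}{\frac{n-\ell}{2}-1}_q,$$ with the convention that $\binom{n}{-1}_q=0$.
   Context: $\mathcal I_m(321)$ is the set of involutions in $\mathcal S_m$ avoiding $321$; $\mathrm{fp}(\pi)$ is its number of fixed points; $\mathrm{maj}(\pi)=\sum_{i:\pi(i)>\pi(i+1)} i$ is the major index. $\binom{n}{k}_q$ is the Gaussian binomial coefficient. *)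

(* Defs.v *)
From HB Require Import structures.
From mathcomp Require Import all_boot all_order all_algebra all_fingroup.
Set Implicit Arguments. Unset Strict Implicit. Unset Printing Implicit Defensive.
Import GRing.Theory.
Local Open Scope ring_scope.

Definition is_involution (m : nat) (s : 'S_m) : bool :=
  [forall i : 'I_m, s (s i) == i].

Definition avoids321 (m : nat) (s : 'S_m) : bool :=
  [forall i : 'I_m, forall j : 'I_m, forall k : 'I_m,
     ((i < j)%N && (j < k)%N) ==> ~~ ((s k < s j)%N && (s j < s i)%N)].

Definition fp (m : nat) (s : 'S_m) : nat := #|[set i : 'I_m | s i == i]|.

Definition oneline (m : nat) (s : 'S_m) : seq nat := [seq val (s i) | i <- enum 'I_m].

(* major index, positions 1-based: descent at position i+1 (1-based) when
   w_i > w_{i+1} (0-based indices i, i+1) *)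
Definition maj (m : nat) (s : 'S_m) : nat :=
  (\sum_(0 <= i < m.-1 | (nth 0 (oneline s) i.+1 < nth 0 (oneline s) i)%N) i.+1)%N.

Fixpoint qbinom (n k : nat) {struct n} : {poly int} :=
  match n, k with
  | _, 0%N => 1
  | 0%N, _.+1 => 0
  | n'.+1, k'.+1 => qbinom n' k' + 'X^(k'.+1) * qbinom n' k'.+1
  end.

(* convention [n, -1]_q = 0 : qbinom n (k-1) for k = 0 is 0 *)
Definition qbinom_pred (n k : nat) : {poly int} :=
  if k is k'.+1 then qbinom n k' else 0.

(* Main.v *)
Require Import Defs.
From HB Require Import structures.
From mathcomp Require Import all_boot all_order all_algebra all_fingroup.
From mathcomp Require Import ring lra zify.
Set Warnings "-all".
Import GRing.Theory.
Local Open Scope ring_scope.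

Lemma qb_n0 n : qbinom n 0 = 1. Proof. by case: n. Qed.
Lemma qbSS n k : qbinom n.+1 k.+1 = qbinom n k + 'X^(k.+1) * qbinom n k.+1.
Proof. by []. Qed.
Lemma qb_gt n k : (n < k)%N -> qbinom n k = 0.
Proof.
elim: n k => [|n IH] [|k] //= H.
by rewrite !IH ?mulr0 ?addr0 // ltnW.
Qed.
Lemma qb_nn n : qbinom n n = 1.
Proof. by elim: n => //= n ->; rewrite qb_gt // mulr0 addr0. Qed.

Lemma qb_pascal2 m k : qbinom (m + k).+1 k.+1 = 'X^m * qbinom (m + k) k + qbinom (m + k) k.+1.
Proof.
elim: m k => [|m IHm] k.
  by rewrite add0n qb_nn (qb_gt _ _ (ltnSn k)) qb_nn addr0 expr0 mulr1.
elim: k => [|j IHj].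
  rewrite addn0 qbSS qb_n0.
  have h1 : qbinom m.+1 1 = 1 + 'X * qbinom m 1 by rewrite qbSS qb_n0 expr1.
  have h2 := IHm 0%N; rewrite addn0 qb_n0 mulr1 in h2.
  by rewrite {1}h2 h1 !exprS expr0; ring.
have e1 : (m.+1 + j.+1 = (m + j).+2)%N by lia.
have e2 : (m.+1 + j = (m + j).+1)%N by lia.
have e3 : (m + j.+1 = (m + j).+1)%N by lia.
have IHm' := IHm j.+1.
rewrite e3 in IHm'. rewrite e2 in IHj. rewrite e1 [LHS]qbSS.
have d1 := qbSS (m + j).+1 j. have d2 := qbSS (m + j).+1 j.+1.
rewrite {1}IHj {1}IHm' d1 d2 !exprS; ring.
Qed.

Lemma qb_sym k : qbinom (k + k).+1 k = qbinom (k + k).+1 k.+1.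
Proof.
have h1 := qbSS (k + k).+1 k.
have h2 := qb_pascal2 k.+1 k.
rewrite addSn in h2.
set A := qbinom (k + k).+1 k in h1 h2 *.
set B := qbinom (k + k).+1 k.+1 in h1 h2 *.
have : (1 - 'X^(k.+1)) * (A - B) = 0.
  have : A + 'X^(k.+1) * B = 'X^(k.+1) * A + B by rewrite -h1 -h2.
  move=> h; have -> : (1 - 'X^(k.+1)) * (A - B) = (A + 'X^(k.+1) * B) - ('X^(k.+1) * A + B) by ring.
  by rewrite h subrr.
move/eqP; rewrite mulf_eq0 => /orP [|]; last by rewrite subr_eq0 => /eqP.
rewrite subr_eq0 => /eqP h; have := congr1 (fun p : {poly int} => size p) h.
by rewrite size_polyXn size_poly1.
Qed.

Lemma qb_step m k : qbinom (m + k).+2 k.+1 =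
  qbinom (m + k).+1 k.+1 + 'X^((m + k).+1) * qbinom (m + k) k
  + qbinom (m + k).+1 k - qbinom (m + k) k.
Proof.
have h := qb_pascal2 m.+1 k. rewrite addSn in h. rewrite h.
case: k h => [|j] h.
  by rewrite !addn0 !qb_n0; ring.
have h2 := qb_pascal2 m.+1 j. rewrite addSn -addnS in h2.
have h3 := qbSS (m + j.+1) j.
rewrite {1}h3 h2 (_ : ((m + j.+1).+1 = m.+1 + j.+1)%N) ?exprD; [ring | lia].
Qed.
Definition letter_seq : seq (option bool) := [:: None; Some false; Some true].
Fixpoint W (n : nat) : seq (seq (option bool)) :=
  if n is n'.+1 then [seq rcons w x | w <- W n', x <- letter_seq] else [:: [::]].
Definition cntx (x : option bool) (w : seq (option bool)) (m : nat) : nat :=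
  count (pred1 x) (take m w).
Definition cU (w : seq (option bool)) := count (pred1 (Some false)) w.
Definition cD (w : seq (option bool)) := count (pred1 (Some true)) w.
Definition okl (x : option bool) (d u : nat) : bool :=
  match x with Some true => (d < u)%N | None => d == u | Some false => true end.
Definition valid (w : seq (option bool)) :=
  all (fun i => okl (nth None w i) (cntx (Some true) w i) (cntx (Some false) w i))
      (iota 0 (size w)).
Definition isD (x : option bool) := x == Some true.
Definition maj3 (w : seq (option bool)) :=
  (\sum_(0 <= i < (size w).-1 | ~~ isD (nth None w i) && isD (nth None w i.+1)) i.+1)%N.

Lemma W_S n : W n.+1 = [seq rcons w x | w <- W n, x <- letter_seq].
Proof. by []. Qed.

Lemma mem_W n w : (w \in W n) = (size w == n).
Proof.
elim: n w => [|n IH] w.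
  by rewrite /= inE; case: w.
rewrite W_S.
case/lastP: w => [|w x]; rewrite ?size_rcons ?eqSS.
  apply/negbTE/allpairsP => -[[v y] [_ _ /= h]].
  by have := congr1 size h; rewrite size_rcons.
rewrite -IH; apply/allpairsP/idP => [[[v y] [hv hy /= h]]|hw].
  by have [-> _] := rcons_inj h.
by exists (w, x); split => //; case: x => [[]|].
Qed.

Lemma uniq_W n : uniq (W n).
Proof.
elim: n => // n IH; rewrite W_S; apply: allpairs_uniq => //.
by move=> [v x] [u y] _ _ /= /rcons_inj [-> ->].
Qed.

Lemma size_W n w : w \in W n -> size w = n.
Proof. by rewrite mem_W => /eqP. Qed.

Lemma cU_rcons w x : cU (rcons w x) = (cU w + (x == Some false))%N.
Proof. by rewrite /cU -cats1 count_cat /= addn0. Qed.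
Lemma cD_rcons w x : cD (rcons w x) = (cD w + (x == Some true))%N.
Proof. by rewrite /cD -cats1 count_cat /= addn0. Qed.

Lemma cntx_rcons x w y m : (m <= size w)%N -> cntx x (rcons w y) m = cntx x w m.
Proof. by move=> h; rewrite /cntx -cats1 takel_cat. Qed.

Lemma valid_rcons w x : valid (rcons w x) = valid w && okl x (cD w) (cU w).
Proof.
rewrite /valid size_rcons -addn1 iotaD all_cat /= andbT add0n.
rewrite nth_rcons ltnn eqxx /cntx -cats1 take_size_cat //.
congr (_ && _); apply: eq_in_all => i; rewrite mem_iota add0n => /andP [_ hi].
by rewrite cats1 nth_rcons hi -!/(cntx _ _ _) !cntx_rcons // ltnW.
Qed.

Lemma maj3_rcons w x : maj3 (rcons w x) =
  (maj3 w + (if ~~ isD (nth None w (size w).-1) && isD x then size w else 0))%N.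
Proof.
rewrite /maj3 size_rcons /=.
case Hs: (size w) => [|m].
  by rewrite !big_geq //; case: ifP.
rewrite big_mkcond [in RHS]big_mkcond big_nat_recr //=.
rewrite !nth_rcons Hs ltnn eqxx leqnn /=; congr (_ + _)%N.
apply: eq_big_nat => i /andP [_ hi].
by rewrite !nth_rcons Hs !ltnS hi (ltnW hi).
Qed.

Lemma valid_cDU w : valid w -> (cD w <= cU w)%N.
Proof.
elim/last_ind: w => // w x IH.
rewrite valid_rcons cD_rcons cU_rcons => /andP [/IH h].
by case: x => [[]|] /=; lia.
Qed.

Lemma sumW n (P : pred (seq (option bool))) (F : seq (option bool) -> {poly int}) :
  \sum_(w <- W n.+1 | P w) F w =
  \sum_(w <- W n | P (rcons w None)) F (rcons w None) +
  \sum_(w <- W n | P (rcons w (Some false))) F (rcons w (Some false)) +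
  \sum_(w <- W n | P (rcons w (Some true))) F (rcons w (Some true)).
Proof.
rewrite W_S big_mkcond big_allpairs_dep /=.
rewrite [X in _ = X + _ + _]big_mkcond [X in _ = _ + X + _]big_mkcond.
rewrite [X in _ = _ + X]big_mkcond -!big_split; apply: eq_bigr => w _.
by rewrite /letter_seq !big_cons big_nil addr0 !addrA.
Qed.

Definition S n k e := \sum_(w <- W n | [&& valid w, cU w == (cD w + e)%N & (cD w <= k)%N])
  ('X^(maj3 w) : {poly int}).
Definition Sn n k e := \sum_(w <- W n | [&& valid w, cU w == (cD w + e)%N & (cD w <= k)%N]
    && ~~ isD (nth None w (size w).-1))
  ('X^(maj3 w) : {poly int}).

Lemma predN w e k : [&& valid (rcons w None), cU (rcons w None) == (cD (rcons w None) + e)%N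
   & (cD (rcons w None) <= k)%N] = (e == 0%N) && [&& valid w, cU w == (cD w + 0)%N & (cD w <= k)%N].
Proof.
rewrite valid_rcons cU_rcons cD_rcons /= !addn0.
case: (valid w); last by rewrite /= andbF.
case: e => [|e] /=; rewrite ?addn0.
  by rewrite eq_sym andbA andbb.
by apply/negP => /and3P [/eqP h1 /eqP h2 _]; lia.
Qed.

Lemma predU w e k : [&& valid (rcons w (Some false)), cU (rcons w (Some false)) == (cD (rcons w (Some false)) + e)%N
   & (cD (rcons w (Some false)) <= k)%N] =
   if e is e'.+1 then [&& valid w, cU w == (cD w + e')%N & (cD w <= k)%N] else false.
Proof.
rewrite valid_rcons cU_rcons cD_rcons /= !addn0 andbT.
case V: (valid w) => /=; last by case: e.
have := valid_cDU _ V.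
case: e => [|e] h; first by apply/negbTE/negP => /andP [/eqP h1 _]; lia.
by rewrite addn1 addnS eqSS.
Qed.

Lemma predD w e k : [&& valid (rcons w (Some true)), cU (rcons w (Some true)) == (cD (rcons w (Some true)) + e)%N
   & (cD (rcons w (Some true)) <= k)%N] =
   if k is k'.+1 then [&& valid w, cU w == (cD w + e.+1)%N & (cD w <= k')%N] else false.
Proof.
rewrite valid_rcons cU_rcons cD_rcons /= !addn0.
case V: (valid w) => /=; last by case: k.
case: k => [|k]; first by rewrite addn1 ltn0 !andbF.
rewrite addn1 ltnS addSn addnS.
case: (leqP (cU w) (cD w)) => h //=.
by apply/esym/negP => /andP [/eqP h1 _]; lia.
Qed.

Lemma nth_last_rcons (w : seq (option bool)) x : nth None (rcons w x) (size (rcons w x)).-1 = x.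
Proof. by rewrite size_rcons /= nth_rcons ltnn eqxx. Qed.

Definition Dt n k e := \sum_(w <- W n | [&& valid w, cU w == (cD w + e)%N & (cD w <= k)%N])
   ('X^(maj3 w + (if ~~ isD (nth None w (size w).-1) then size w else 0)) : {poly int}).

Lemma S_rec n k e : S n.+1 k e =
  (if e == 0%N then S n k 0 else 0) + (if e is e'.+1 then S n k e' else 0) +
  (if k is k'.+1 then Dt n k' e.+1 else 0).
Proof.
rewrite /S sumW; congr (_ + _ + _).
- rewrite (eq_bigl _ _ (fun w : seq (option bool) => predN w e k)).
  case: e => [|e] /=; last by rewrite big_pred0.
  by apply: eq_bigr => w _; rewrite maj3_rcons andbF addn0.
- rewrite (eq_bigl _ _ (fun w : seq (option bool) => predU w e k)).
  case: e => [|e]; first by rewrite big_pred0.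
  by apply: eq_bigr => w _; rewrite maj3_rcons andbF addn0.
- rewrite (eq_bigl _ _ (fun w : seq (option bool) => predD w e k)).
  case: k => [|k]; first by rewrite big_pred0.
  by apply: eq_bigr => w _; rewrite maj3_rcons andbT.
Qed.

Lemma Sn_rec n k e : Sn n.+1 k e =
  (if e == 0%N then S n k 0 else 0) + (if e is e'.+1 then S n k e' else 0).
Proof.
rewrite /Sn sumW /=.
under eq_bigl => w do rewrite nth_last_rcons andbT.
under [X in _ + X + _]eq_bigl => w do rewrite nth_last_rcons andbT.
under [X in _ + X]eq_bigl => w do rewrite nth_last_rcons andbF.
rewrite big_pred0_eq addr0.
congr (_ + _).
- rewrite (eq_bigl _ _ (fun w : seq (option bool) => predN w e k)).
  case: e => [|e] /=; last by rewrite big_pred0.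
  by apply: eq_bigr => w _; rewrite maj3_rcons andbF addn0.
- rewrite (eq_bigl _ _ (fun w : seq (option bool) => predU w e k)).
  case: e => [|e]; first by rewrite big_pred0.
  by apply: eq_bigr => w _; rewrite maj3_rcons andbF addn0.
Qed.

Lemma Sn_recS n k e : Sn n.+1 k e.+1 = S n k e.
Proof. by rewrite Sn_rec /= add0r. Qed.

Lemma Dt_eq n k e : Dt n k e = 'X^n * Sn n k e + (S n k e - Sn n k e).
Proof.
rewrite /Dt /S /Sn (bigID (fun w => ~~ isD (nth None w (size w).-1))) /=.
rewrite [X in _ = _ + (X - _)](bigID (fun w => ~~ isD (nth None w (size w).-1))) /=.
rewrite [_ + _ - _]addrC addKr mulr_sumr; congr (_ + _).
- rewrite big_seq_cond [RHS]big_seq_cond; apply: eq_bigr => w /andP [/size_W -> /andP [_ ->]].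
  by rewrite exprD mulrC.
- apply: eq_bigr => w /andP [_ /negbTE ->]; by rewrite addn0.
Qed.

Lemma cUD_size w : (cU w + cD w <= size w)%N.
Proof.
elim/last_ind: w => // w x IH.
by rewrite cU_rcons cD_rcons size_rcons; case: x => [[]|] /=; lia.
Qed.

Lemma S_cap n k e : (n < k.+1 + k.+1 + e)%N -> S n k.+1 e = S n k e.
Proof.
move=> h; rewrite /S big_seq_cond [RHS]big_seq_cond; apply: eq_bigl => w.
case W1: (w \in W n) => //=; case: (valid w) => //=.
have := cUD_size w; rewrite (size_W _ _ W1) => h2.
case: eqP => //= h3; rewrite leq_eqVlt ltnS; case: eqP => //= h4; lia.
Qed.

Lemma S_closed n : forall k e, (k + k + e <= n)%N -> S n k e = qbinom n k.
Proof.
elim/ltn_ind: n => -[|n] IH k e h.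
  have hk : k = 0%N by lia.
  have he : e = 0%N by lia.
  subst.
  rewrite /S big_mkcond big_seq1 /= /maj3 big_geq //. 
rewrite S_rec.
have -> : (if e == 0%N then S n k 0 else 0) + (if e is e'.+1 then S n k e' else 0) = qbinom n k.
  case: e h => [|e] h /=.
    rewrite addr0; case: (leqP (k + k) n) => hk; first by apply: IH; rewrite ?addn0.
    case: k h hk => [|k] h hk; first by lia.
    rewrite S_cap; last by lia.
    rewrite IH //; last by lia.
    have -> : n = (k + k).+1 by lia.
    by rewrite qb_sym.
  by rewrite add0r IH //; lia.
case: k h => [|k] h.
  by rewrite addr0 !qb_n0.
rewrite Dt_eq IH //; last by lia.
case: n IH h => [|n] IH h; first by lia.
rewrite Sn_recS IH //; last by lia.
have [m ->] : exists m, n = (m + k)%N by exists (n - k)%N; lia.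
by rewrite qb_step; ring.
Qed.

Set Implicit Arguments. Unset Strict Implicit.

Definition rk n (lt : 'I_n -> option bool) (x : option bool) (m : nat) : nat :=
  #|[set j : 'I_n | (j < m)%N && (lt j == x)]|.
Arguments rk {n}.

Section Rank.
Variables (n : nat) (lt : 'I_n -> option bool) (x : option bool).
Local Notation r := (rk lt x).

Lemma rk0 : r 0 = 0%N.
Proof. by apply/eqP; rewrite cards_eq0; apply/eqP/setP => j; rewrite !inE ltn0. Qed.

Lemma rk_mono m m' : (m <= m')%N -> (r m <= r m')%N.
Proof.
move=> h; apply: subset_leq_card; apply/subsetP => j; rewrite !inE => /andP [h1 ->].
by rewrite (leq_trans h1 h).
Qed.

Lemma rk_strict (j : 'I_n) m : lt j == x -> (j < m)%N -> (r j < r m)%N.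
Proof.
move=> hj hm; apply: proper_card; apply/properP; split.
  apply/subsetP => k; rewrite !inE => /andP [h1 ->]; by rewrite (ltn_trans h1 hm).
by exists j; rewrite !inE ?hm ?hj ?ltnn.
Qed.

Lemma rk_lt (i j : 'I_n) : (r i < r j)%N -> (i < j)%N.
Proof. by move=> h; rewrite ltnNge; apply/negP => /(rk_mono); lia. Qed.

Lemma rk_inj (i j : 'I_n) : lt i == x -> lt j == x -> r i = r j -> i = j.
Proof.
move=> hi hj e; apply: val_inj => /=.
case: (ltngtP i j) => // h.
  by have := rk_strict hi h; lia.
by have := rk_strict hj h; lia.
Qed.

Lemma rkS m (hm : (m < n)%N) : r m.+1 = (r m + (lt (Ordinal hm) == x))%N.
Proof.
rewrite /rk (cardsD1 (Ordinal hm)) inE /= ltnSn /= addnC; congr (_ + _)%N.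
apply: eq_card => j; rewrite !inE ltnS.
case: (ltngtP j m) => h /=.
- by rewrite (_ : j != Ordinal hm) //; apply/eqP => /(congr1 val) /= e; lia.
- by case: (_ != _).
- by rewrite (_ : j = Ordinal hm) ?eqxx //; apply: val_inj.
Qed.

Lemma rkS_ge m : (n <= m)%N -> r m.+1 = r m.
Proof.
move=> h; apply: eq_card => j; rewrite !inE.
by rewrite (ltn_trans (ltn_ord j)) ?ltnS // (leq_trans (ltn_ord j)).
Qed.

Lemma rk_exists rr : (rr < r n)%N -> exists j : 'I_n, lt j == x /\ r j = rr.
Proof.
suff: forall m, (rr < r m)%N -> exists j : 'I_n, lt j == x /\ r j = rr by apply.
elim=> [|m IH]; first by rewrite rk0.
case: (ltnP m n) => hm; last by rewrite rkS_ge //; apply: IH.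
rewrite rkS; case: (ltnP rr (r m)) => h1 h2; first by apply: IH.
exists (Ordinal hm); move: h2; case: (lt (Ordinal hm) == x) => /= h2; last by lia.
by split => //=; lia.
Qed.

End Rank.

Lemma eq_rk n (l1 l2 : 'I_n -> option bool) x m : l1 =1 l2 -> rk l1 x m = rk l2 x m.
Proof. by move=> e; apply: eq_card => j; rewrite !inE e. Qed.

Lemma cntxS x w m : cntx x w m.+1 = (cntx x w m + ((m < size w)%N && (nth None w m == x)))%N.
Proof.
rewrite /cntx; case: (ltnP m (size w)) => h /=.
  by rewrite (take_nth None h) -cats1 count_cat /= addn0.
by rewrite !take_oversize ?addn0 // ltnW.
Qed.

Lemma cntx_rk n w x m : size w = n ->
  cntx x w m = rk (fun j : 'I_n => nth None w j) x m.
Proof.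
move=> hs; elim: m => [|m IH]; first by rewrite rk0 /cntx take0.
rewrite cntxS IH hs; case: (ltnP m n) => h.
  by rewrite (rkS _ _ h) /=.
by rewrite rkS_ge // addn0.
Qed.

Definition letter n (s : 'S_n) (i : 'I_n) : option bool :=
  if s i == i then None else Some (s i < i)%N.
Definition wf n (s : 'S_n) : seq (option bool) := [seq letter s i | i <- enum 'I_n].
Definition twoinc n (s : 'S_n) :=
  forall i j : 'I_n, (i < j)%N -> (s i < i)%N = (s j < j)%N -> (s i < s j)%N.

Lemma size_wf n (s : 'S_n) : size (wf s) = n.
Proof. by rewrite size_map size_enum_ord. Qed.

Lemma nth_wf n (s : 'S_n) (j : 'I_n) : nth None (wf s) j = letter s j.
Proof. by rewrite /wf (nth_map j) ?size_enum_ord // nth_ord_enum. Qed.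

Lemma cntx_wf n (s : 'S_n) x m : cntx x (wf s) m = rk (letter s) x m.
Proof. by rewrite (cntx_rk _ _ (size_wf s)); apply: eq_rk => j; rewrite nth_wf. Qed.

Lemma letD n (s : 'S_n) i : (letter s i == Some true) = (s i < i)%N.
Proof. by rewrite /letter; case: ifP => [/eqP ->|]; rewrite ?ltnn. Qed.

Lemma letU n (s : 'S_n) i : (letter s i == Some false) = (i < s i)%N.
Proof.
rewrite /letter; case: ifP => [/eqP ->|h]; first by rewrite ltnn.
case: (ltngtP (s i) i) => //= e.
by move: h; rewrite (_ : s i = i) ?eqxx //; apply: val_inj.
Qed.

Lemma letN n (s : 'S_n) i : (letter s i == None) = (s i == i).
Proof. by rewrite /letter; case: ifP. Qed.

Section Inv.
Variables (n : nat) (s : 'S_n).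
Hypothesis Hinv : forall i, s (s i) = i.
Hypothesis Htwo : twoinc s.

Local Notation rU := (rk (letter s) (Some false)).
Local Notation rD := (rk (letter s) (Some true)).

Lemma L1 (i : 'I_n) : (i < s i)%N -> rD (s i) = rU i.
Proof.
move=> hi; rewrite /rk.
rewrite -[RHS](card_imset _ (@perm_inj _ s)); apply: eq_card => c.
apply/idP/imsetP.
  rewrite !inE letD => /andP [h1 h2]; exists (s c); last by rewrite Hinv.
  rewrite !inE letU Hinv h2 andbT.
  have := Htwo h1; rewrite Hinv h2 => /(_ (esym hi)).
  by [].
move=> [o]; rewrite !inE letU => /andP [h1 h2] ->.
rewrite letD Hinv h2 andbT.
apply: Htwo => //; rewrite ltnNge leq_eqVlt h2 orbT /=.
by rewrite ltnNge leq_eqVlt hi orbT.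
Qed.

Lemma L2 (i : 'I_n) : s i = i -> rD i = rU i.
Proof.
move=> hi; rewrite /rk.
rewrite -[RHS](card_imset _ (@perm_inj _ s)); apply: eq_card => c.
apply/idP/imsetP.
  rewrite !inE letD => /andP [h1 h2]; exists (s c); last by rewrite Hinv.
  by rewrite !inE letU Hinv h2 andbT (ltn_trans h2).
move=> [o]; rewrite !inE letU => /andP [h1 h2] ->.
rewrite letD Hinv h2 andbT.
have := Htwo h1; rewrite hi ltnn ltnNge leq_eqVlt h2 orbT; by apply.
Qed.

Lemma L3 : rD n = rU n.
Proof.
rewrite /rk.
rewrite -[RHS](card_imset _ (@perm_inj _ s)); apply: eq_card => c.
apply/idP/imsetP.
  rewrite !inE letD => /andP [_ h2]; exists (s c); last by rewrite Hinv.
  by rewrite !inE letU Hinv h2 ltn_ord.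
move=> [o]; rewrite !inE letU => /andP [_ h2] ->.
by rewrite letD Hinv h2 ltn_ord.
Qed.


Lemma valid_wf : valid (wf s).
Proof.
apply/allP => i; rewrite size_wf mem_iota add0n => /andP [_ hi].
have -> : i = val (Ordinal hi) by [].
rewrite nth_wf !cntx_wf.
set j := Ordinal hi.
rewrite /letter; case: ifP => [/eqP hj|hj] /=; first by rewrite (L2 hj).
case: ifP => hl //=.
have ho : (s j < s (s j))%N by rewrite Hinv.
have := L1 ho; rewrite Hinv => ->.
by apply: rk_strict => //; rewrite letU Hinv.
Qed.

Lemma desc (j1 j2 : 'I_n) : val j2 = (val j1).+1 ->
  (s j2 < s j1)%N = ~~ (s j1 < j1)%N && (s j2 < j2)%N.
Proof.
move=> e; have e' : nat_of_ord j2 = (nat_of_ord j1).+1 := e.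
case h1: (s j1 < j1)%N; case h2: (s j2 < j2)%N => /=.
- apply/negbTE; rewrite -leqNgt; apply: ltnW; apply: Htwo; [by rewrite e | by rewrite h1 h2].
- apply/negbTE; rewrite -leqNgt.
  move/negbT: h2; rewrite -leqNgt => h2; lia.
- have ne : nat_of_ord (s j2) <> nat_of_ord (s j1).
    by move=> /val_inj /perm_inj h; move: e; rewrite h; lia.
  move/negbT: h1; rewrite -leqNgt => h1; lia.
- apply/negbTE; rewrite -leqNgt; apply: ltnW; apply: Htwo; [by rewrite e | by rewrite h1 h2].
Qed.

End Inv.

Lemma cnt_full n (s : 'S_n) x : count (pred1 x) (wf s) = rk (letter s) x n.
Proof. by rewrite -cntx_wf /cntx take_oversize ?size_wf. Qed.

Definition cN (w : seq (option bool)) := count (pred1 None) w.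
Lemma cN_rcons w x : cN (rcons w x) = (cN w + (x == None))%N.
Proof. by rewrite /cN -cats1 count_cat /= addn0. Qed.

Lemma count3 (w : seq (option bool)) : (cN w + cU w + cD w)%N = size w.
Proof.
elim/last_ind: w => // w x IH.
rewrite cN_rcons cU_rcons cD_rcons size_rcons.
by case: x => [[]|] /=; lia.
Qed.

Lemma fp_rk n (s : 'S_n) : fp s = rk (letter s) None n.
Proof. by rewrite /fp /rk; apply: eq_card => j; rewrite !inE ltn_ord letN. Qed.

Lemma bal_wf n (s : 'S_n) : (forall i, s (s i) = i) -> twoinc s -> cU (wf s) = cD (wf s).
Proof. by move=> h1 h2; rewrite /cU /cD !cnt_full (L3 h1). Qed.

Lemma fp_wf n (s : 'S_n) : (forall i, s (s i) = i) -> twoinc s ->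
  (fp s + (cD (wf s)).*2)%N = n.
Proof.
move=> h1 h2; have := count3 (wf s); rewrite size_wf (bal_wf h1 h2) /cN cnt_full -fp_rk.
rewrite -addnn; lia.
Qed.

Lemma nth_oneline n (s : 'S_n) k (hk : (k < n)%N) : nth 0%N (oneline s) k = s (Ordinal hk).
Proof.
rewrite /oneline (nth_map (Ordinal hk)) ?size_enum_ord //.
by have := nth_ord_enum (Ordinal hk) (Ordinal hk) => /= ->.
Qed.

Lemma nth_wf' n (s : 'S_n) k (hk : (k < n)%N) : nth None (wf s) k = letter s (Ordinal hk).
Proof. by have := nth_wf s (Ordinal hk) => /= ->. Qed.

Lemma maj_wf n (s : 'S_n) : (forall i, s (s i) = i) -> twoinc s -> maj s = maj3 (wf s).
Proof.
move=> h1 h2.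
rewrite /maj /maj3 size_wf big_nat_cond [RHS]big_nat_cond; apply: eq_bigl => i.
rewrite leq0n /=; case: (ltnP i n.-1) => hi //=.
have hi1 : (i < n)%N by lia.
have hi2 : (i.+1 < n)%N by lia.
rewrite (nth_oneline s hi1) (nth_oneline s hi2) (nth_wf' s hi1) (nth_wf' s hi2) /isD !letD.
by rewrite (desc h2 (j1:=Ordinal hi1) (j2:=Ordinal hi2)) //=.
Qed.

Lemma inv_of n (s : 'S_n) : is_involution s -> forall i, s (s i) = i.
Proof. by move/forallP => h i; apply/eqP. Qed.

Lemma two_of_321 n (s : 'S_n) : is_involution s -> avoids321 s -> twoinc s.
Proof.
move=> /inv_of hi /forallP h3.
have H3 : forall a b c : 'I_n, (a < b)%N -> (b < c)%N -> (s c < s b)%N -> (s b < s a)%N -> False.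
  move=> a b c hab hbc h1 h2.
  by have := h3 a => /forallP /(_ b) /forallP /(_ c); rewrite hab hbc h1 h2.
move=> i j hij e.
case: (ltngtP (s i) (s j)) => // hs.
- exfalso; case hci: (s i < i)%N e => e.
  + apply: (H3 (s j) (s i) j); rewrite ?hi //; lia.
  + move/negbT: hci; rewrite -leqNgt => hci.
    move/esym/negbT: e; rewrite -leqNgt => hcj.
    case: (ltngtP j (s j)) => hj.
    * by apply: (H3 i j (s j)); rewrite ?hi //; lia.
    * lia.
    * apply: (H3 i j (s i)); rewrite ?hi //; lia.
- by move/val_inj/perm_inj: hs => h; move: hij; rewrite h ltnn.
Qed.

Lemma two_321 n (s : 'S_n) : twoinc s -> avoids321 s.
Proof.
move=> ht; apply/forallP => i; apply/forallP => j; apply/forallP => k.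
apply/implyP => /andP [hij hjk]; apply/negP => /andP [h1 h2].
have Hij := ht i j hij; have Hjk := ht j k hjk; have Hik := ht i k (ltn_trans hij hjk).
case ci: (s i < i)%N in Hij Hik; case cj: (s j < j)%N in Hij Hjk;
  case ck: (s k < k)%N in Hjk Hik.
all: first [ move: (Hij erefl) | move: (Hjk erefl) | move: (Hik erefl) ]; lia.
Qed.

Lemma wf_inj n (s1 s2 : 'S_n) : (forall i, s1 (s1 i) = i) -> twoinc s1 ->
  (forall i, s2 (s2 i) = i) -> twoinc s2 -> wf s1 = wf s2 -> s1 = s2.
Proof.
move=> i1 t1 i2 t2 e.
have el : letter s1 =1 letter s2 by move=> j; rewrite -!nth_wf e.
have hD : forall (t : 'S_n) j, letter t j = Some true -> (t j < j)%N.
  by move=> t j h; rewrite -letD h.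
have hU : forall (t : 'S_n) j, letter t j = Some false -> (j < t j)%N.
  by move=> t j h; rewrite -letU h.
have hN : forall (t : 'S_n) j, letter t j = None -> t j = j.
  by move=> t j h; apply/eqP; rewrite -letN h.
have eU m : rk (letter s2) (Some false) m = rk (letter s1) (Some false) m.
  by apply: eq_rk => j; rewrite el.
have eD m : rk (letter s2) (Some true) m = rk (letter s1) (Some true) m.
  by apply: eq_rk => j; rewrite el.
apply/permP => i.
case hl: (letter s1 i) => [[]|].
- have h1 := hD _ _ hl. have h2 := hD s2 i; rewrite -el hl in h2. have {}h2 := h2 erefl.
  have o1 : (s1 i < s1 (s1 i))%N by rewrite i1.
  have o2 : (s2 i < s2 (s2 i))%N by rewrite i2.
  have r1 := L1 i1 t1 o1; have r2 := L1 i2 t2 o2.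
  rewrite i1 in r1; rewrite i2 eU eD in r2.
  apply: (@rk_inj _ (letter s1) (Some false)); first by rewrite letU.
    by rewrite el letU.
  by rewrite -r1 -r2.
- have h1 := hU _ _ hl. have h2 := hU s2 i; rewrite -el hl in h2. have {}h2 := h2 erefl.
  have r1 := L1 i1 t1 h1; have r2 := L1 i2 t2 h2.
  rewrite eU eD in r2.
  apply: (@rk_inj _ (letter s1) (Some true)); first by rewrite letD i1.
    by rewrite el letD i2.
  by rewrite r1 r2.
- by rewrite (hN _ _ hl) hN // -el.
Qed.

Lemma map_nth_enum n (w : seq (option bool)) : size w = n ->
  [seq nth None w j | j : 'I_n <- enum 'I_n] = w.
Proof.
move=> hs; rewrite -[LHS]/(map (nth None w \o val) (enum 'I_n)) map_comp val_enum_ord -hs.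
by rewrite -/(mkseq _ _) mkseq_nth.
Qed.

Section Surj.
Variables (n : nat) (w : seq (option bool)).
Hypotheses (Hs : size w = n) (Hv : valid w) (Hb : cU w = cD w).
Local Notation ltw := (fun j : 'I_n => nth None w j).

Lemma Hok (i : 'I_n) : okl (ltw i) (rk ltw (Some true) i) (rk ltw (Some false) i).
Proof.
move/allP: Hv => /(_ i); rewrite mem_iota Hs ltn_ord /= => /(_ isT).
by rewrite !(cntx_rk _ _ Hs).
Qed.

Lemma HvD (i : 'I_n) : ltw i = Some true ->
  (rk ltw (Some true) i < rk ltw (Some false) i)%N.
Proof. by move=> h; have := Hok i; rewrite /= h. Qed.

Lemma HvF (i : 'I_n) : ltw i = None -> rk ltw (Some true) i = rk ltw (Some false) i.
Proof. by move=> h; have := Hok i; rewrite /= h => /eqP. Qed.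

Lemma Hbal : rk ltw (Some true) n = rk ltw (Some false) n.
Proof.
have e x : count (pred1 x) w = rk ltw x n.
  by rewrite -(cntx_rk _ _ Hs) /cntx take_oversize // Hs.
by have := Hb; rewrite /cU /cD !e.
Qed.

Definition fsurj (i : 'I_n) : 'I_n :=
  match ltw i with
  | None => i
  | Some b => odflt i [pick j | (ltw j == Some (~~ b)) &&
                               (rk ltw (Some (~~ b)) j == rk ltw (Some b) i)]
  end.

Lemma fspec (i : 'I_n) b : ltw i = Some b ->
  ltw (fsurj i) = Some (~~ b) /\ rk ltw (Some (~~ b)) (fsurj i) = rk ltw (Some b) i.
Proof.
move=> h.
have [j [hj1 hj2]] : exists j : 'I_n, ltw j == Some (~~ b) /\
    rk ltw (Some (~~ b)) j = rk ltw (Some b) i.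
  apply: rk_exists; case: b h => h /=.
    apply: (leq_trans (HvD h)); apply: rk_mono; exact: ltnW.
  rewrite Hbal; apply: rk_strict => //; by rewrite h.
rewrite /fsurj h.
case: pickP => [j' /andP [/eqP h1 /eqP h2] | hn]; first by [].
by have := hn j; rewrite hj1 hj2 eqxx.
Qed.

Lemma fN (i : 'I_n) : ltw i = None -> fsurj i = i.
Proof. by move=> h; rewrite /fsurj h. Qed.

Lemma f_inv : cancel fsurj fsurj.
Proof.
move=> i; case h: (ltw i) => [b|]; last by rewrite !fN.
have [h1 h2] := fspec h; have [h3 h4] := fspec h1.
rewrite negbK in h3 h4.
apply: (@rk_inj _ ltw (Some b)); [by rewrite h3 | by rewrite h | by rewrite h4 h2].
Qed.

Lemma fD (i : 'I_n) : ltw i = Some true -> (fsurj i < i)%N.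
Proof.
move=> h; have [h1 h2] := fspec h.
apply: (rk_lt (lt := ltw) (x := Some false)); rewrite h2; exact: HvD.
Qed.

Lemma fU (i : 'I_n) : ltw i = Some false -> (i < fsurj i)%N.
Proof.
move=> h; have [h1 h2] := fspec h.
apply: (rk_lt (lt := ltw) (x := Some false)); rewrite -h2; exact: HvD.
Qed.

Definition sp : 'S_n := perm (can_inj f_inv).

Lemma letter_sp (i : 'I_n) : letter sp i = ltw i.
Proof.
rewrite /letter permE.
case h: (ltw i) => [[]|].
- have := fD h => hl; rewrite hl ifN //; apply/eqP => e; by move: hl; rewrite e ltnn.
- have := fU h => hl; rewrite ifN; last by apply/eqP => e; move: hl; rewrite e ltnn.
  by rewrite ltnNge (ltnW hl).
- by rewrite fN // eqxx.
Qed.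

Lemma wf_sp : wf sp = w.
Proof. by rewrite /wf (eq_map letter_sp) map_nth_enum. Qed.

Lemma inv_sp : is_involution sp.
Proof. by apply/forallP => i; rewrite !permE f_inv. Qed.

Lemma two_sp : twoinc sp.
Proof.
move=> i j hij; rewrite !permE.
case hi: (ltw i) => [[]|]; case hj: (ltw j) => [[]|].
- move=> _; have [_ a1] := fspec hi; have [_ a2] := fspec hj.
  apply: (rk_lt (lt := ltw) (x := Some false)); rewrite a1 a2.
  apply: rk_strict => //; by rewrite hi.
- by rewrite (fD hi) ltnNge (ltnW (fU hj)).
- by rewrite (fD hi) fN // ltnn.
- by rewrite (fD hj) ltnNge (ltnW (fU hi)).
- move=> _; have [_ a1] := fspec hi; have [_ a2] := fspec hj.
  apply: (rk_lt (lt := ltw) (x := Some true)); rewrite a1 a2.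
  apply: rk_strict => //; by rewrite hi.
- move=> _; have [_ a1] := fspec hi; rewrite (fN hj).
  apply: (rk_lt (lt := ltw) (x := Some true)); rewrite a1 (HvF hj).
  apply: rk_strict => //; by rewrite hi.
- by rewrite (fD hj) fN // ltnn.
- move=> _; rewrite (fN hi); exact: (ltn_trans hij (fU hj)).
- by move=> _; rewrite !fN.
Qed.

End Surj.

Lemma surj_wf n (w : seq (option bool)) : size w = n -> valid w -> cU w = cD w ->
  exists s : 'S_n, [/\ is_involution s, avoids321 s & wf s = w].
Proof.
move=> hs hv hb; exists (sp hs hv hb); split.
- exact: inv_sp.
- apply: two_321; exact: two_sp.
- exact: wf_sp.
Qed.

Lemma reindex n (Q : nat -> bool) :
  \sum_(s : 'S_n | [&& is_involution s, avoids321 s & Q (cD (wf s))]) ('X^(maj s) : {poly int})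
  = \sum_(w <- W n | [&& valid w, cU w == (cD w + 0)%N & Q (cD w)]) 'X^(maj3 w).
Proof.
rewrite -big_filter.
set P := fun s : 'S_n => [&& is_involution s, avoids321 s & Q (cD (wf s))].
transitivity (\sum_(s <- [seq s <- index_enum _ | P s]) ('X^(maj3 (wf s)) : {poly int})).
  rewrite !big_seq; apply: eq_bigr => s; rewrite mem_filter => /andP [/and3P [hi ha _] _].
  by rewrite maj_wf //; [exact: inv_of | exact: two_of_321].
rewrite -(big_map (@wf n) predT (fun w => ('X^(maj3 w) : {poly int}))) -[RHS]big_filter.
apply: perm_big; apply: uniq_perm.
- rewrite map_inj_in_uniq ?filter_uniq ?index_enum_uniq //.
  move=> s1 s2; rewrite !mem_filter => /andP [/and3P [i1 a1 _] _] /andP [/and3P [i2 a2 _] _].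
  apply: wf_inj; [exact: inv_of | exact: two_of_321 | exact: inv_of | exact: two_of_321].
- by rewrite filter_uniq // uniq_W.
- move=> w; rewrite mem_filter mem_W; apply/mapP/idP.
    move=> [s hs ->]; move: hs; rewrite mem_filter => /andP [/and3P [hi ha hq] _].
    have i1 := inv_of hi; have t1 := two_of_321 hi ha.
    by rewrite (valid_wf i1 t1) addn0 (bal_wf i1 t1) eqxx hq size_wf eqxx.
  move=> /andP [/and3P [hv hb hq] hs].
  have hb' : cU w = cD w by rewrite addn0 in hb; apply/eqP.
  have [s [h1 h2 h3]] := surj_wf (eqP hs) hv hb'.
  exists s => //; rewrite mem_filter mem_index_enum andbT /P h1 h2 h3 hq.
  done.
Qed.

Theorem mainTheorem13 :
  (forall a b : nat, (a <= b)%N ->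
     \sum_(s : 'S_(a + b) | [&& is_involution s, avoids321 s & (b - a <= fp s)%N])
        ('X^(maj s) : {poly int})
     = qbinom (a + b) a)
  /\
  (forall n l : nat, (l <= n)%N -> ~~ odd (n - l) ->
     \sum_(s : 'S_n | [&& is_involution s, avoids321 s & fp s == l])
        ('X^(maj s) : {poly int})
     = qbinom n ((n - l)./2) - qbinom_pred n ((n - l)./2)).
Proof.
split.
- move=> a b hab.
  rewrite (eq_bigl (fun s => [&& is_involution s, avoids321 s & (cD (wf s) <= a)%N])).
    rewrite (@reindex _ (fun d => (d <= a)%N)).
    by apply: (S_closed (a + b)%N a 0); lia.
  move=> s; case hi: (is_involution s); case ha: (avoids321 s) => //=.
  have := fp_wf (inv_of hi) (two_of_321 hi ha).
  by move=> h; apply/idP/idP => h'; lia.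
- move=> n l hl hodd.
  have hk : (n - l = ((n - l)./2).*2)%N by rewrite even_halfK.
  move: ((n - l)./2) hk => k hk.
  rewrite (eq_bigl (fun s => [&& is_involution s, avoids321 s & (cD (wf s) == k)])).
    rewrite (@reindex _ (fun d => d == k)).
    have eS k' : (k' <= k)%N -> S n k' 0 = qbinom n k'.
      by move=> h; apply: S_closed; lia.
    rewrite -(eS k) //.
    have -> : S n k 0 = \sum_(w <- W n | [&& valid w, cU w == (cD w + 0)%N & cD w == k])
        ('X^(maj3 w) : {poly int}) + (if k is k'.+1 then S n k' 0 else 0).
      rewrite /S (bigID (fun w => cD w == k)) /=; congr (_ + _).
        apply: eq_bigl => w; case: (valid w) => //=; case: (_ == _) => //=.
        by case: eqP => [->|]; rewrite ?leqnn ?andbF.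
      case: k eS {hk} => [|k'] eS.
        by rewrite big_pred0 // => w; rewrite leqn0; case: (cD w == 0%N); rewrite /= ?andbF ?andbT.
      apply: eq_bigl => w; case: (valid w) => //=; case: (_ == _) => //=.
      by rewrite andbC -ltn_neqAle ltnS.
    case: k eS {hk} => [|k'] eS /=; first by rewrite addr0 subr0.
    by rewrite eS ?addrK.
  move=> s; case hi: (is_involution s); case ha: (avoids321 s) => //=.
  have := fp_wf (inv_of hi) (two_of_321 hi ha).
  by move=> h; apply/eqP/eqP => h'; lia.
Qed.
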